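(* Let $G$ be a chordal graph with evaporation sequence $L_1,\dots,L_t$ with exception set $X$ (a clique), where $t\ge 2$, and suppose $X\cup L_t$ is a clique. For each connected component $C$ of $G[L_{t-1}]$ let $\hat N(C):=N_G(C)\cap(X\cup L_t)$. Then one of the following holds: (1) there is at most one connected component $C$ of $G[L_{t-1}]$ with $\hat N(C)=X\cup L_t$, and $L_t\subseteq\bigcup\{\hat N(C): C \text{ a component of } G[L_{t-1}],\ \hat N(C)\ne X\cup L_t\}$; (2) there are at least two distinct connected components $C_1,C_2$ of $G[L_{t-1}]$ with $\hat N(C_1)=\hat N(C_2)=X\cup L_t$.
   Context: A vertex is simplicial if its neighborhood is a clique. For a chordal graph $G$ and a clique $X\subseteq V(G)$ (possibly empty), the evaporation sequence of $G$ with exception set $X$ is defined recursively: if $X=V(G)$ it is the empty sequence; otherwise let $L_1$ be the set of simplicial vertices of $G$ that are not in $X$ (this set is always nonempty), and the evaporation sequence is $L_1$ followed by the evaporation sequence of $G-L_1$ with exception set $X$. For $S\subseteq V(G)$, $N_G(S)$ is the set of vertices not in $S$ adjacent to some vertex of $S$. *)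

(* Defs.v *)
From mathcomp Require Import all_boot.
Set Implicit Arguments. Unset Strict Implicit. Unset Printing Implicit Defensive.

Section Graphs.
Variables (T : finType) (g : rel T).

Definition simple_graph : Prop := symmetric g /\ irreflexive g.

Definition is_clique (S : {set T}) : bool :=
  [forall x in S, forall y in S, (x != y) ==> g x y].

Definition simplicial (V : {set T}) (v : T) : bool :=
  (v \in V) && is_clique [set u in V | g v u].

(* chordal: every cycle of length >= 4 (uniq vertex sequence, consecutive
   vertices adjacent, cyclically) has a chord *)
Definition chordal : Prop :=
  forall s : seq T, uniq s -> 4 <= size s -> cycle g s ->
    exists x y, [/\ x \in s, y \in s, x != y, g x y &
                   (y != next s x) && (x != next s y)].

Definition evap_layer (X V : {set T}) : {set T} :=
  [set v in V | simplicial V v && (v \notin X)].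

Inductive evap_seq (X : {set T}) : {set T} -> seq {set T} -> Prop :=
| evap_nil : evap_seq X X [::]
| evap_cons V Ls : V != X -> evap_seq X (V :\: evap_layer X V) Ls ->
    evap_seq X V (evap_layer X V :: Ls).

Definition induced (S : {set T}) : rel T :=
  [rel a b | [&& g a b, a \in S & b \in S]].

Definition components (S : {set T}) : {set {set T}} :=
  [set [set y in S | connect (induced S) x y] | x in S].

Definition nbhd (C : {set T}) : {set T} :=
  [set v | (v \notin C) && [exists u in C, g u v]].

End Graphs.

(* Main.v *)
Require Import Defs.
From mathcomp Require Import all_boot.
Set Implicit Arguments. Unset Strict Implicit. Unset Printing Implicit Defensive.

Lemma evap_nil_eq (T : finType) (g : rel T) X V Ls :
  evap_seq g X V Ls -> Ls = [::] -> V = X.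
Proof. by case. Qed.

Lemma evap_cons_inv (T : finType) (g : rel T) X V L Ls :
  evap_seq g X V (L :: Ls) ->
  [/\ V != X, L = evap_layer g X V & evap_seq g X (V :\: L) Ls].
Proof. move=> h; inversion h; subst; by split. Qed.

Lemma evap_last2 (T : finType) (g : rel T) (X : {set T}) :
  forall Ls V, evap_seq g X V Ls -> 2 <= size Ls -> exists V',
  [/\ nth set0 Ls (size Ls).-2 = evap_layer g X V',
      nth set0 Ls (size Ls).-1 = evap_layer g X (V' :\: evap_layer g X V') &
      (V' :\: evap_layer g X V') :\: evap_layer g X (V' :\: evap_layer g X V') = X].
Proof.
elim=> [|L Ls IH] V h //= hs.
have [_ -> H3] := evap_cons_inv h; clear h.
case: Ls IH H3 hs => [|L2 Ls] IH H3 hs //.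
case: Ls IH H3 hs => [|L3 Ls] IH H3 hs.
  exists V; have [_ e H5] := evap_cons_inv H3; subst L2; split => //.
  exact: evap_nil_eq H5 _.
have [V' [h1 h2 h3]] := IH _ H3 isT.
exists V'; split => //.
Qed.
Section H.
Variables (T : finType) (g : rel T).
Hypothesis gsym : symmetric g.

Lemma cliqueP (S : {set T}) x y :
  is_clique g S -> x \in S -> y \in S -> x != y -> g x y.
Proof. by move=> /forall_inP/(_ x) h hx hy hxy; move: (h hx) => /forall_inP/(_ y hy)/implyP; apply. Qed.

Lemma cliqueI (S : {set T}) :
  (forall x y, x \in S -> y \in S -> x != y -> g x y) -> is_clique g S.
Proof. by move=> h; apply/forall_inP=> x hx; apply/forall_inP=> y hy; apply/implyP; apply: h. Qed.

Definition nb (V : {set T}) (x : T) := [set w in V | (w == x) || g x w].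

Lemma nb_sub V x y : simplicial g V x -> simplicial g V y -> g x y ->
  nb V x \subset nb V y.
Proof.
move=> /andP[xV cx] /andP[yV cy] gxy; apply/subsetP=> z; rewrite !inE.
case/andP=> zV /orP[/eqP->|gxz]; first by rewrite xV gsym gxy orbT.
rewrite zV /=; have [->|nzy] := eqVneq z y; first by [].
by apply: (cliqueP cx); rewrite ?inE ?yV ?zV ?gxy ?gxz // eq_sym.
Qed.

Lemma nb_eq V x y : simplicial g V x -> simplicial g V y -> g x y ->
  nb V x = nb V y.
Proof.
move=> sx sy gxy; apply/eqP; rewrite eqEsubset !nb_sub //.
by rewrite gsym.
Qed.

Lemma conn_nb (V S : {set T}) x y : (forall u, u \in S -> simplicial g V u) ->
  connect (induced g S) x y -> nb V x = nb V y.
Proof.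
move=> hS hc.
have cl : closed (induced g S) [pred z | nb V z == nb V x].
  move=> a b /and3P[gab aS bS] /=. rewrite !inE /=.
  by rewrite (nb_eq (hS a aS) (hS b bS) gab).
by have := closed_connect cl hc; rewrite !inE /= eqxx => /esym/eqP.
Qed.
End H.

Theorem lemma5p15 (T : finType) (g : rel T) (X : {set T}) (Ls : seq {set T}) :
  simple_graph g -> chordal g -> is_clique g X ->
  evap_seq g X [set: T] Ls -> 2 <= size Ls ->
  let Lt := nth set0 Ls (size Ls).-1 in
  let Lt1 := nth set0 Ls (size Ls).-2 in
  let Y := X :|: Lt in
  let Nhat := fun C : {set T} => nbhd g C :&: Y in
  is_clique g Y ->
  ((#|[set C in components g Lt1 | Nhat C == Y]| <= 1 /\
    Lt \subset \bigcup_(C in components g Lt1 | Nhat C != Y) Nhat C)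
   \/
   (exists C1 C2, [/\ C1 \in components g Lt1, C2 \in components g Lt1,
                     C1 != C2, Nhat C1 = Y & Nhat C2 = Y])).
Proof.
move=> [gsym girr] _ hX hev hs Lt Lt1 Y Nhat hY.
have [V [e1 e2 e3]] := evap_last2 hev hs.
have eLt1 : Lt1 = evap_layer g X V by [].
have eLt : Lt = evap_layer g X (V :\: Lt1) by rewrite eLt1.
have eX : X = (V :\: Lt1) :\: Lt by rewrite eLt eLt1.
have F1 u : u \in Lt1 -> u \in V /\ simplicial g V u.
  by rewrite eLt1 inE => /and3P[-> -> _].
have F2 v : v \in Lt -> [/\ v \in V, v \notin Lt1 & v \notin X].
  by rewrite eLt inE => /and3P[]; rewrite inE => /andP[-> ->] _ ->.
have F3 v : v \in Lt -> ~~ simplicial g V v.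
  move=> hv; have [vV vL1 vX] := F2 v hv; apply: contra vL1 => sv.
  by rewrite eLt1 inE vV sv vX.
have F4 u : u \in V -> u \notin Lt1 -> u \in Y.
  move=> uV uL1; rewrite inE; case: (boolP (u \in Lt)) => hu; first by rewrite orbT.
  by rewrite eX !inE hu uL1 uV.
pose comp u := [set y in Lt1 | connect (induced g Lt1) u y].
have compC u : u \in Lt1 -> comp u \in components g Lt1.
  by move=> hu; apply/imsetP; exists u.
have compu u : u \in Lt1 -> u \in comp u by move=> hu; rewrite inE hu connect0.
have compc u w : w \in comp u -> connect (induced g Lt1) u w.
  by rewrite inE => /andP[].
have hS : forall u, u \in Lt1 -> simplicial g V u by move=> u /F1[].
set F := [set C in components g Lt1 | Nhat C == Y].
case: (leqP #|F| 1) => hF; last first.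
  right; have [C1 [C2 [h1 h2 h12]]] := card_gt1P hF.
  move: h1 h2; rewrite !inE => /andP[c1 /eqP n1] /andP[c2 /eqP n2].
  by exists C1, C2.
left; split => //.
apply/subsetP => v hv; apply/negPn/negP => hnot.
have [vV vL1 vX] := F2 v hv.
have full u : u \in Lt1 -> g v u -> Nhat (comp u) = Y.
  move=> hu gvu; apply/eqP; apply: contraNT hnot => hn.
  apply: (subsetP (bigcup_sup (comp u) _)); first by rewrite compC.
  rewrite !inE (negbTE vL1) /= hv orbT andbT; apply/existsP; exists u.
  by rewrite compu // gsym.
have sameC u w : u \in Lt1 -> w \in Lt1 -> g v u -> g v w -> comp u = comp w.
  move=> hu hw gu gw; apply: (card_le1_eqP hF); rewrite inE compC //= full //.
have key x y : x \in Lt1 -> y \in V -> g v y -> x != y -> g v x -> g x y.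
  move=> hx yV gvy nxy gvx.
  have yin : forall u, connect (induced g Lt1) x u -> y \in nb g V u -> g x y.
    move=> u cxu; rewrite -(conn_nb gsym (V:=V) hS cxu) inE yV /=.
    by case/orP=> // /eqP e; rewrite e eqxx in nxy.
  case: (boolP (y \in Lt1)) => hy.
    apply: (yin y); last by rewrite inE yV eqxx.
    by apply: compc; rewrite (sameC x y) // compu.
  have : y \in Nhat (comp x) by rewrite full // F4.
  rewrite !inE => /andP[/andP[_ /exists_inP[u hu guy]] _].
  by apply: (yin u (compc _ _ hu)); rewrite inE yV guy orbT.
move/negP: (F3 v hv); apply; rewrite /simplicial vV /=; apply: cliqueI => x y.
rewrite !inE => /andP[xV gvx] /andP[yV gvy] nxy.
case: (boolP (x \in Lt1)) => hx; first exact: key.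
case: (boolP (y \in Lt1)) => hy; first by rewrite gsym; apply: key => //; rewrite eq_sym.
by apply: (cliqueP hY) => //; apply: F4.
Qed.
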